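(* Let $-\infty<m\le M<\infty$, let $A$ be a non-empty closed subset of $[m,M]$, and let $\delta>0$. Then $$\lambda\big(A^\delta\cap[m,M]\big)\ge\big(\lambda(A)+\delta\big)\wedge(M-m).$$
   Context: $\lambda$ is Lebesgue measure. For non-empty $A\subseteq\mathbb R$ and $\delta>0$, the $\delta$-expansion is $A^\delta=\{x\in\mathbb R:\exists a\in A\text{ with }|x-a|\le\delta\}$. *)

(* Defs.v *)
From HB Require Import structures.
From mathcomp Require Import all_boot all_order all_algebra.
From mathcomp Require Import all_classical all_reals all_analysis.
Set Implicit Arguments. Unset Strict Implicit. Unset Printing Implicit Defensive.
Import Order.TTheory GRing.Theory Num.Theory.
Local Open Scope classical_set_scope.
Local Open Scope ring_scope.

Definition expansion (R : realType) (A : set R) (delta : R) : set R :=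
  [set x | exists2 a, A a & `|x - a| <= delta].

(* Main.v *)
Require Import Defs.
From HB Require Import structures.
From mathcomp Require Import all_boot all_order all_algebra.
From mathcomp Require Import all_classical all_reals all_analysis.
From mathcomp Require Import lra measurable_realfun.
Import Order.TTheory GRing.Theory Num.Theory numFieldNormedType.Exports.
Local Open Scope classical_set_scope.
Local Open Scope ring_scope.
Local Open Scope ereal_scope.

Lemma sup_mem_closed (R : realType) (S : set R) :
  S !=set0 -> closed S -> has_ubound S -> S (sup S).
Proof.
move=> S0 cS uS; apply: itv_closed_supremums => //; split.
- exact: sup_upper_bound.
- by move=> y; exact: ge_sup.
Qed.

Lemma inf_mem_closed (R : realType) (S : set R) :
  S !=set0 -> closed S -> has_lbound S -> S (inf S).
Proof.
move=> S0 cS uS; apply: itv_closed_infimums => //; split.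
- exact: ge_inf.
- by move=> y; exact: lb_le_inf.
Qed.

Lemma mono_leb {R : realType} {X Y : set R} : X `<=` Y ->
  (@lebesgue_measure R) X <= (@lebesgue_measure R) Y.
Proof. by move=> XY; exact: le_outer_measure. Qed.

Theorem mainTheorem18 (R : realType) (m M : R) (A : set R) (delta : R) :
  (m <= M)%R ->
  A !=set0 -> closed A -> A `<=` `[m, M]%classic ->
  (0 < delta)%R ->
  Order.min ((@lebesgue_measure R) A + delta%:E) (M - m)%:E
    <= (@lebesgue_measure R) (expansion A delta `&` `[m, M]%classic).
Proof.
move=> mM A0 cA Asub d0.
set B := expansion A delta `&` `[m, M]%classic.
have mA : measurable A by exact: closed_measurable.
have AB : A `<=` B.
  move=> a Aa; split; last exact: Asub.
  by exists a => //; rewrite subrr normr0 ltW.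
case: (pselect (`[m, M]%classic `<=` B)) => [full|].
  rewrite ge_min; apply/orP; right.
  have h := mono_leb full; rewrite lebesgue_measure_itv /= in h.
  move: h; rewrite lte_fin; case: ltP => [_|Mm]; first by rewrite EFinD.
  have -> : M = m by apply/le_anti/andP.
  by rewrite subrr => _; exact: measure_ge0.
move/existsNP => [z /not_implyP [zmM nBz]].
have far : forall a, A a -> (delta < `|z - a|)%R.
  move=> a Aa; rewrite ltNge; apply/negP => za; apply: nBz; split => //.
  by exists a.
move: zmM; rewrite /= in_itv /= => /andP[mz zM].
case: A0 => a0 Aa0.
rewrite ge_min; apply/orP; left.
have key : forall C : set R, measurable C -> C `<=` B -> A `&` C = set0 ->
    (@lebesgue_measure R) C = delta%:E ->
    (@lebesgue_measure R) A + delta%:E <= (@lebesgue_measure R) B.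
  move=> C mC CB AC lC; rewrite -lC -measureU //.
  by apply: mono_leb => x [/AB|/CB].
have [a0z|za0] := ltP a0 z.
- pose S := A `&` `]-oo, z]%classic.
  have Sb : S (sup S).
    apply: sup_mem_closed.
    + by exists a0; split => //; rewrite /= in_itv /= ltW.
    + by apply: closedI => //; exact: lray_closed.
    + by exists z => x [_]; rewrite /= in_itv /=.
  set b := sup S in Sb.
  case: Sb => Ab; rewrite /= in_itv /= => bz.
  have := far _ Ab; rewrite ger0_norm ?subr_ge0 // => bdz.
  have := Asub _ Ab; rewrite /= in_itv /= => /andP[mb bM].
  apply: (key _ (measurable_itv `]b, (b + delta)%R])).
  + move=> x; rewrite /= in_itv /= => /andP[bx xbd]; split.
      by exists b => //; rewrite ler_distl; apply/andP; split; lra.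
    by rewrite /= in_itv /=; apply/andP; split; lra.
  + apply/seteqP; split => // x [Ax]; rewrite /= in_itv /= => /andP[bx xbd].
    have : (x <= b)%R.
      apply: sup_upper_bound => //.
        by split; [exists b; split => //; rewrite /= in_itv /=|exists z => y [_]; rewrite /= in_itv /=].
      by split => //; rewrite /= in_itv /=; lra.
    lra.
  + by rewrite lebesgue_measure_itv /= lte_fin ltrDl d0 -EFinD addrAC subrr add0r.
- pose S := A `&` `[z, +oo[%classic.
  have Sb : S (inf S).
    apply: inf_mem_closed.
    + by exists a0; split => //; rewrite /= in_itv /= za0.
    + by apply: closedI => //; exact: rray_closed.
    + by exists z => x [_]; rewrite /= in_itv /= andbT.
  set b := inf S in Sb.
  case: Sb => Ab; rewrite /= in_itv /= andbT => zb.
  have := far _ Ab; rewrite distrC ger0_norm ?subr_ge0 // => bdz.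
  have := Asub _ Ab; rewrite /= in_itv /= => /andP[mb bM].
  apply: (key _ (measurable_itv `[(b - delta)%R, b[)).
  + move=> x; rewrite /= in_itv /= => /andP[bx xbd]; split.
      by exists b => //; rewrite ler_distl; apply/andP; split; lra.
    by rewrite /= in_itv /=; apply/andP; split; lra.
  + apply/seteqP; split => // x [Ax]; rewrite /= in_itv /= => /andP[bx xbd].
    have : (b <= x)%R.
      apply: ge_inf => //.
        by exists z => y [_]; rewrite /= in_itv /= andbT.
      by split => //; rewrite /= in_itv /= andbT; lra.
    lra.
  + rewrite lebesgue_measure_itv /= lte_fin ltrBlDr ltrDl d0 -EFinD.
    by congr (_%:E); lra.
Qed.
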